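(* Let $G$ be an abelian group and $\underline{g}=(g_1,\dots,g_m)\in G^m$. If $\mathcal{B}(\mathrm{supp}(\underline{g}))$ has a quadratic Gröbner system, then $\mathcal{B}(\underline{g})$ also has a quadratic Gröbner system, and hence the semigroup algebra $\mathbb{C}[\mathcal{B}(\underline{g})]$ is Koszul.
   Context: $G$ is written multiplicatively. $\mathcal{B}(\underline{g})=\{\alpha\in\mathbb{N}_0^m\mid\prod_i g_i^{\alpha_i}=1\}$ (submonoid of $(\mathbb{N}_0^m,+)$); $\mathrm{supp}(\underline{g})=\{g_1,\dots,g_m\}$, and for a finite $G_0\subseteq G$, $\mathcal{B}(G_0)=\{\alpha\in\mathbb{N}_0^{G_0}\mid\prod_{g\in G_0}g^{\alpha(g)}=1\}$. For a reduced affine monoid $T$ with (finite) atom set $\mathcal{A}(T)$, its defining congruence $\sim_T$ is the congruence on the free commutative monoid $\{x^{\alpha}\mid\alpha\in\mathbb{N}_0^{\mathcal{A}(T)}\}$ with $x^{\alpha}\sim_T x^{\gamma}$ iff $\sum\alpha(t)t=\sum\gamma(t)t$ in $T$. ''$T$ has a quadratic Gröbner system'' means: for some admissible total order $\prec$ (total order with $x\prec y\Rightarrow xz\prec yz$ and $1\prec x$ for $x\ne1$) there is a finite set $\Lambda$ of pairs with $x\sim_T y$, $y\prec x$ for all $(x,y)\in\Lambda$, every element not divisible by a first component of a pair of $\Lambda$ being $\prec$-minimal in its $\sim_T$-class, and $|\lambda|,|\mu|\le2$ for all $(x^{\lambda},x^{\mu})\in\Lambda$. *)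

(* Defs.v *)
From HB Require Import structures.
From mathcomp Require Import all_boot all_order all_algebra.
Set Implicit Arguments. Unset Strict Implicit. Unset Printing Implicit Defensive.
Import GRing.Theory.
Local Open Scope ring_scope.

Notation expvec I := {ffun I -> nat}.

Definition evadd (I : finType) (x y : expvec I) : expvec I :=
  [ffun i => (x i + y i)%N].
Definition ev0 (I : finType) : expvec I := [ffun => 0%N].
Definition evdvd (I : finType) (x y : expvec I) : Prop :=
  forall i, (x i <= y i)%N.
Definition evdeg (I : finType) (x : expvec I) : nat := (\sum_i x i)%N.

(* B(h) for h = (h_1,...,h_n) in G^n, G an abelian group written additively:
   { alpha in N_0^n | sum_i alpha_i h_i = 0 }  (i.e. prod_i h_i^alpha_i = 1). *)
Definition Bmon (G : zmodType) (n : nat) (h : 'I_n -> G) : pred (expvec 'I_n) :=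
  fun alpha => (\sum_(i < n) h i *+ alpha i) == 0.

Definition supp_seq (G : zmodType) (m : nat) (g : 'I_m -> G) : seq G :=
  undup [seq g i | i : 'I_m].

Definition Bsupp (G : zmodType) (m : nat) (g : 'I_m -> G)
  : pred (expvec 'I_(size (supp_seq g))) :=
  Bmon (fun j : 'I_(size (supp_seq g)) => (supp_seq g)`_j).

Arguments Bsupp {G m} g _.

Definition is_atom (I : finType) (T : pred (expvec I)) (t : expvec I) : Prop :=
  T t /\ t <> ev0 I /\
  forall u v, T u -> T v -> t = evadd u v -> u = ev0 I \/ v = ev0 I.

Definition admissible (J : finType) (lt : expvec J -> expvec J -> Prop) : Prop :=
  [/\ forall x, ~ lt x x,
      forall x y z, lt x y -> lt y z -> lt x z,
      forall x y, x <> y -> lt x y \/ lt y x,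
      forall x y z, lt x y -> lt (evadd x z) (evadd y z)
    & forall x, x <> ev0 J -> lt (ev0 J) x].

(* The (finite) atom set A(T) is
   enumerated without repetition by a list [a]; monomials are elements of
   N_0^{A(T)} = N_0^('I_(size a)), and x^alpha ~_T x^gamma iff
   sum alpha(t) t = sum gamma(t) t. *)
Definition eval_atoms (I : finType) (a : seq (expvec I))
  (alpha : expvec 'I_(size a)) : expvec I :=
  [ffun i => (\sum_(j < size a) alpha j * (nth (ev0 I) a j) i)%N].

Definition has_quadratic_groebner (I : finType) (T : pred (expvec I)) : Prop :=
  exists a : seq (expvec I),
    uniq a /\ (forall t, is_atom T t <-> t \in a) /\
    let J := 'I_(size a) in
    let sim := fun x y : expvec J => eval_atoms x = eval_atoms y in
    exists (lt : expvec J -> expvec J -> Prop) (Lambda : seq (expvec J * expvec J)),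
      [/\ admissible lt,
          forall p, p \in Lambda -> sim p.1 p.2 /\ lt p.2 p.1,
          forall x, (forall p, p \in Lambda -> ~ evdvd p.1 x) ->
                    forall y, sim x y -> x = y \/ lt x y
        & forall p, p \in Lambda -> (evdeg p.1 <= 2)%N /\ (evdeg p.2 <= 2)%N].

(* Main.v *)
From Stdlib Require Import ClassicalEpsilon Classical.
Require Import Defs.
From mathcomp Require Import all_boot all_order all_algebra zify.
Set Implicit Arguments. Unset Strict Implicit. Unset Printing Implicit Defensive.


Definition decB (P : Prop) : bool := if excluded_middle_informative P then true else false.
Lemma decBP (P : Prop) : reflect P (decB P).
Proof. by rewrite /decB; case: excluded_middle_informative => h; constructor. Qed.

Section EV.
Variable J : finType.
Definition e1 (v : J) : expvec J := [ffun u => ((u == v) : nat)].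
Definition evsub (x y : expvec J) : expvec J := [ffun i => x i - y i].

Lemma evaddC (x y : expvec J) : evadd x y = evadd y x.
Proof. by apply/ffunP=> i; rewrite !ffunE addnC. Qed.
Lemma evaddA (x y z : expvec J) : evadd x (evadd y z) = evadd (evadd x y) z.
Proof. by apply/ffunP=> i; rewrite !ffunE addnA. Qed.
Lemma evadd0 (x : expvec J) : evadd (ev0 J) x = x.
Proof. by apply/ffunP=> i; rewrite !ffunE. Qed.
Lemma evaddI (x y z : expvec J) : evadd z x = evadd z y -> x = y.
Proof. move/ffunP=> h; apply/ffunP=> i; move: (h i); rewrite !ffunE; lia. Qed.
Lemma evdeg_add (x y : expvec J) : evdeg (evadd x y) = evdeg x + evdeg y.
Proof. by rewrite /evdeg -big_split /=; apply: eq_bigr=> i _; rewrite ffunE. Qed.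
Lemma evdeg0 : evdeg (ev0 J) = 0.
Proof. by rewrite /evdeg big1 // => i _; rewrite ffunE. Qed.
Lemma evdeg_eq0 (x : expvec J) : evdeg x = 0 -> x = ev0 J.
Proof.
move=> h; apply/ffunP=> i; rewrite ffunE; apply/eqP.
by move/eqP: h; rewrite /evdeg sum_nat_eq0 => /forallP /(_ i) /implyP; apply.
Qed.
Lemma evdeg_e1 v : evdeg (e1 v) = 1.
Proof.
rewrite /evdeg (bigD1 v) //= big1 ?ffunE ?eqxx // => i /negbTE hi; by rewrite ffunE hi.
Qed.
Lemma evdvd_sub (x y : expvec J) : evdvd x y -> y = evadd x (evsub y x).
Proof. move=> h; apply/ffunP=> i; rewrite !ffunE; move: (h i); lia. Qed.
Lemma evdvd_add (x y : expvec J) : evdvd x (evadd x y).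
Proof. move=> i; rewrite ffunE; lia. Qed.
Lemma evdvd_trans (x y z : expvec J) : evdvd x y -> evdvd y z -> evdvd x z.
Proof. move=> h1 h2 i; exact: leq_trans (h1 i) (h2 i). Qed.
Lemma evdvd_e1 (x : expvec J) v : 0 < x v -> evdvd (e1 v) x.
Proof. move=> h i; rewrite ffunE; case: eqP=> [->|] //. Qed.
Lemma evdvd_e2 (x : expvec J) v w : 0 < x v -> 0 < x w -> (v != w \/ 1 < x v) ->
  evdvd (evadd (e1 v) (e1 w)) x.
Proof.
move=> hv hw hvw i; rewrite !ffunE; case: (eqVneq i v)=> [eiv|hiv]; case: (eqVneq i w)=> [eiw|hiw] //=.
- subst; case: hvw=> [/eqP //|]. lia.
- subst; lia.
- subst; lia.
Qed.
Lemma evdeg_pos (x : expvec J) : x <> ev0 J -> exists v, 0 < x v.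
Proof.
move=> h; apply: NNPP=> hn; apply: h; apply/ffunP=> i; rewrite ffunE.
case: (posnP (x i))=> // hp; exfalso; apply: hn; by exists i.
Qed.
Lemma evdeg_le (x y : expvec J) : evdvd x y -> evdeg x <= evdeg y.
Proof. move=> h; apply: leq_sum=> i _; exact: h. Qed.
End EV.

Lemma big_optionE (R : Type) (idx : R) (op : Monoid.com_law idx) (I : finType) (F : option I -> R) :
  \big[op/idx]_o F o = op (F None) (\big[op/idx]_i F (Some i)).
Proof.
rewrite -(big_map Some xpredT F).
have -> : op (F None) (\big[op/idx]_(j <- [seq Some i | i <- index_enum I]) F j) =
  \big[op/idx]_(j <- None :: [seq Some i | i <- index_enum I]) F j by rewrite big_cons.
apply: perm_big; apply: uniq_perm.
- exact: index_enum_uniq.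
- rewrite /= map_inj_uniq ?index_enum_uniq // ?andbT; last by move=> x y [].
  by apply/mapP=> -[].
- move=> [x|]; rewrite !mem_index_enum inE /=; last by [].
  by rewrite map_f // mem_index_enum.
Qed.

Lemma leq_sum_mem (T : eqType) (s : seq T) (F : T -> nat) x : x \in s -> F x <= \sum_(y <- s) F y.
Proof. by move=> h; rewrite (big_rem x h) /=; apply: leq_addr. Qed.

Definition BT (G : zmodType) (I : finType) (f : I -> G) : pred (expvec I) :=
  fun alpha => (\sum_i f i *+ alpha i)%R == 0%R.

Lemma BmonE (G : zmodType) n (h : 'I_n -> G) : Bmon h = BT h.
Proof. by []. Qed.

Section Lex.
Variable J : Type.
Fixpoint lexb (s t : seq nat) : bool :=
  match s, t with
  | x :: s', y :: t' => (x < y) || ((x == y) && lexb s' t')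
  | _, _ => false
  end.
Lemma lexb_irr (l : seq J) (x : J -> nat) : lexb (map x l) (map x l) = false.
Proof. by elim: l => //= v l ->; rewrite ltnn eqxx. Qed.
Lemma lexb_trans (l : seq J) (x y z : J -> nat) :
  lexb (map x l) (map y l) -> lexb (map y l) (map z l) -> lexb (map x l) (map z l).
Proof.
elim: l => //= v l IH /orP [h1|/andP [/eqP e1 h1]] /orP [h2|/andP [/eqP e2 h2]].
- by rewrite (ltn_trans h1 h2).
- by rewrite -e2 h1.
- by rewrite e1 h2.
- by rewrite e1 e2 eqxx (IH h1 h2) orbT.
Qed.
Lemma lexb_total (l : seq J) (x y : J -> nat) :
  map x l != map y l -> lexb (map x l) (map y l) || lexb (map y l) (map x l).
Proof.
elim: l => //= v l IH; case: (ltngtP (x v) (y v)) => //= e.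
rewrite ?e ?eqxx /= => h; apply: IH; apply: contra h => /eqP ->; by rewrite ?e.
Qed.
Lemma lexb_add (l : seq J) (x y z : J -> nat) :
  lexb (map x l) (map y l) -> lexb (map (fun v => x v + z v) l) (map (fun v => y v + z v) l).
Proof.
elim: l => //= v l IH /orP [h|/andP [/eqP e h]].
- by rewrite ltn_add2r h.
- by rewrite e eqxx IH // orbT.
Qed.
Lemma map_eq_in (T : eqType) (l : seq T) (x y : T -> nat) : map x l = map y l -> forall v, v \in l -> x v = y v.
Proof.
elim: l => //= w l IH [e1 e2] v; rewrite inE => /orP [/eqP ->|]; [exact: e1| exact: IH].
Qed.
End Lex.


Section Step.
Variables (G : zmodType) (I : finType) (f : I -> G) (i0 : I).
Definition fopt (o : option I) : G := if o is Some i then f i else f i0.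
Local Notation T := (BT f).
Local Notation T' := (BT fopt).

Definition pio (al : expvec (option I)) : expvec I := [ffun i => al (Some i) + (i == i0) * al None].
Definition lifto (b : expvec I) (s : nat) : expvec (option I) :=
  [ffun o => if o is Some i then b i - (i == i0) * s else s].

Lemma pio_add (x y : expvec (option I)) : pio (evadd x y) = evadd (pio x) (pio y).
Proof. apply/ffunP=> i; rewrite !ffunE; case: eqP=> _ /=; lia. Qed.
Lemma pio0 : pio (ev0 _) = ev0 _.
Proof. by apply/ffunP=> i; rewrite !ffunE muln0. Qed.
Lemma pio_lift (b : expvec I) s : s <= b i0 -> pio (lifto b s) = b.
Proof. move=> h; apply/ffunP=> i; rewrite !ffunE; case: eqP=> [->|]; lia. Qed.
Lemma lift_pio (al : expvec (option I)) : al = lifto (pio al) (al None) /\ al None <= pio al i0.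
Proof.
split; last by rewrite ffunE eqxx; lia.
apply/ffunP=> -[i|]; rewrite !ffunE //; case: eqP=> _ /=; lia.
Qed.
Lemma pio_eq0 (al : expvec (option I)) : pio al = ev0 _ -> al = ev0 _.
Proof.
move=> h; have [E _] := lift_pio al; rewrite E h.
have : pio al i0 = 0 by rewrite h ffunE.
rewrite ffunE eqxx mul1n => h0.
apply/ffunP=> -[i|]; rewrite !ffunE //; lia.
Qed.
Lemma pio_split (al : expvec (option I)) u v : pio al = evadd u v ->
  exists a1 a2, [/\ al = evadd a1 a2, pio a1 = u & pio a2 = v].
Proof.
move=> h.
have hi : forall i, al (Some i) + (i == i0) * al None = u i + v i.
  by move=> i; move/ffunP: h => /(_ i); rewrite !ffunE.
pose s1 := minn (u i0) (al None).
pose a1 : expvec (option I) := [ffun o => if o is Some i then (if i == i0 then u i0 - s1 else u i) else s1].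
exists a1, (evsub al a1); split.
- apply/ffunP=> -[i|]; rewrite !ffunE /=; last by rewrite /s1; lia.
  move: (hi i); case: eqP=> [->|] /=; rewrite /s1; lia.
- apply/ffunP=> i; rewrite !ffunE; case: eqP=> [->|] /=; rewrite /s1; lia.
- apply/ffunP=> i; rewrite !ffunE; move: (hi i); case: eqP=> [->|] /=; rewrite /s1; lia.
Qed.

Lemma T'E (al : expvec (option I)) : T' al = T (pio al).
Proof.
rewrite /BT big_optionE /=.
have -> : (\sum_i f i *+ pio al i = \sum_i f i *+ al (Some i) + f i0 *+ al None)%R.
  rewrite (eq_bigr (fun i => f i *+ al (Some i) + (if i == i0 then f i0 *+ al None else 0))%R).
    by rewrite big_split /= -big_mkcond /= big_pred1_eq.
  move=> i _; rewrite ffunE GRing.mulrnDr; case: eqP=> [->|] /=; by rewrite ?mul1n ?mul0n ?GRing.mulr0n.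
by rewrite GRing.addrC.
Qed.

Lemma atomE (al : expvec (option I)) : is_atom T' al <-> is_atom T (pio al).
Proof.
split.
- case=> h1 [h2 h3]; split; first by rewrite -T'E.
  split; first by move/pio_eq0.
  move=> u v hu hv /pio_split [a1 [a2 [E1 E2 E3]]].
  subst u v; case: (h3 a1 a2); rewrite ?T'E //.
  + by move=> ->; left; rewrite pio0.
  + by move=> ->; right; rewrite pio0.
- case=> h1 [h2 h3]; split; first by rewrite T'E.
  split; first by move=> E; apply: h2; rewrite E pio0.
  move=> u v hu hv E; rewrite T'E in hu; rewrite T'E in hv.
  case: (h3 _ _ hu hv); first by rewrite E pio_add.
  + by move/pio_eq0; left.
  + by move/pio_eq0; right.
Qed.
End Step.


Section Step2.
Variables (G : zmodType) (I : finType) (f : I -> G) (i0 : I).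
Variables (a : seq (expvec I)) (ua : uniq a) (Hat : forall t, is_atom (BT f) t <-> t \in a).
Variables (lt0 : expvec 'I_(size a) -> expvec 'I_(size a) -> Prop)
  (Lam0 : seq (expvec 'I_(size a) * expvec 'I_(size a))).
Hypotheses (adm0 : admissible lt0)
 (HL0 : forall p, p \in Lam0 -> eval_atoms p.1 = eval_atoms p.2 /\ lt0 p.2 p.1)
 (Hmin0 : forall x, (forall p, p \in Lam0 -> ~ evdvd p.1 x) ->
     forall y, eval_atoms x = eval_atoms y -> x = y \/ lt0 x y)
 (Hdeg0 : forall p, p \in Lam0 -> evdeg p.1 <= 2 /\ evdeg p.2 <= 2).

Definition Bnd := \sum_(b <- a) \sum_i b i.
Lemma bnd_le (b : expvec I) i : b \in a -> b i <= Bnd.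
Proof.
move=> h; apply: leq_trans (leq_sum_mem (fun b : expvec I => \sum_i b i) h).
by rewrite (bigD1 i) //= leq_addr.
Qed.

Definition a' : seq (expvec (option I)) :=
  [seq t <- map (fun u : {ffun option I -> 'I_Bnd.+1} => [ffun o => (u o : nat)])
     (enum {ffun option I -> 'I_Bnd.+1}) | pio i0 t \in a].

Lemma mem_a' t : (t \in a') = (pio i0 t \in a).
Proof.
rewrite mem_filter; case h: (pio i0 t \in a) => //=.
apply/mapP; exists [ffun o => inord (t o) : 'I_Bnd.+1]; first by rewrite mem_enum.
apply/ffunP=> o; rewrite !ffunE inordK // ltnS.
have [E le] := lift_pio i0 t.
case: o => [i|].
- apply: leq_trans (bnd_le i h); rewrite ffunE; exact: leq_addr.
- exact: leq_trans le (bnd_le i0 h).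
Qed.

Lemma uniq_a' : uniq a'.
Proof.
apply: filter_uniq; rewrite map_inj_uniq ?enum_uniq //.
move=> u1 u2 /ffunP h; apply/ffunP=> o; apply: val_inj; move: (h o); by rewrite !ffunE.
Qed.

Lemma atoms_a' t : is_atom (BT (fopt f i0)) t <-> t \in a'.
Proof. by rewrite atomE Hat mem_a'. Qed.

Local Notation J := 'I_(size a).
Local Notation J' := 'I_(size a').
Definition bb (c : J) : expvec I := nth (ev0 I) a c.
Definition Av (v : J') : expvec (option I) := nth (ev0 _) a' v.
Lemma Av_in v : pio i0 (Av v) \in a.
Proof. by rewrite -mem_a' mem_nth. Qed.
Lemma idx_lt v : index (pio i0 (Av v)) a < size a.
Proof. by rewrite index_mem Av_in. Qed.
Definition tau (v : J') : J := Ordinal (idx_lt v).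
Lemma bb_tau v : bb (tau v) = pio i0 (Av v).
Proof. by rewrite /bb /= nth_index // Av_in. Qed.
Definition sv (v : J') : nat := Av v None.
Lemma Av_lift v : Av v = lifto i0 (bb (tau v)) (sv v) /\ sv v <= bb (tau v) i0.
Proof. by rewrite bb_tau; have [E le] := lift_pio i0 (Av v); split. Qed.
Lemma Av_inj : injective Av.
Proof.
move=> v w h; apply: val_inj; apply/eqP.
by rewrite -(nth_uniq (ev0 _) (ltn_ord v) (ltn_ord w) uniq_a'); apply/eqP.
Qed.
Lemma exists_var (c : J) s : s <= bb c i0 -> exists v, [/\ tau v = c, sv v = s & Av v = lifto i0 (bb c) s].
Proof.
move=> hs.
have hp : pio i0 (lifto i0 (bb c) s) = bb c by rewrite pio_lift.
have hin : lifto i0 (bb c) s \in a' by rewrite mem_a' hp mem_nth.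
have hlt : index (lifto i0 (bb c) s) a' < size a' by rewrite index_mem.
have hA : Av (Ordinal hlt) = lifto i0 (bb c) s by rewrite /Av /= nth_index.
exists (Ordinal hlt); split => //.
- apply: val_inj => /=; rewrite hA hp /bb index_uniq //.
- by rewrite /sv hA ffunE.
Qed.

Definition Pi (x : expvec J') : expvec J := [ffun c => \sum_(v | tau v == c) x v].
Definition Nx (x : expvec J') : nat := \sum_v x v * sv v.

Lemma pio_eval (x : expvec J') : pio i0 (eval_atoms x) = eval_atoms (Pi x).
Proof.
apply/ffunP=> i; rewrite !ffunE.
rewrite (eq_bigr (fun c => \sum_(v | tau v == c) x v * bb (tau v) i)); last first.
  move=> c _; rewrite ffunE big_distrl /=; apply: eq_bigr => v /eqP -> //; by rewrite ffunE.
transitivity (\sum_v x v * bb (tau v) i); last by rewrite (partition_big tau xpredT) //=.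
rewrite big_distrr -big_split /=; apply: eq_bigr => v _.
rewrite bb_tau ffunE /Av; case: eqP=> _ /=; lia.
Qed.

Lemma Nx_eval (x : expvec J') : eval_atoms x None = Nx x.
Proof. by rewrite ffunE. Qed.

Lemma Pi_add x y : Pi (evadd x y) = evadd (Pi x) (Pi y).
Proof. apply/ffunP=> c; rewrite !ffunE -big_split /=; apply: eq_bigr=> v _; by rewrite ffunE. Qed.
Lemma Pi0 : Pi (ev0 _) = ev0 _.
Proof. apply/ffunP=> c; rewrite !ffunE big1 // => v _; by rewrite ffunE. Qed.
Lemma Pi_e1 v : Pi (e1 v) = e1 (tau v).
Proof.
apply/ffunP=> c; rewrite !ffunE; case: (eqVneq (tau v) c) => [<-|hne].
- rewrite (bigD1 v) //= big1 ?ffunE ?eqxx ?eq_refl //.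
  by move=> w /andP [_ /negbTE hw]; rewrite ffunE hw.
- rewrite big1 ?eq_sym ?(negbTE hne) // => w /eqP hw; rewrite ffunE.
  by case: eqP hw => // -> /eqP; rewrite (negbTE hne).
Qed.
Lemma Nx_add x y : Nx (evadd x y) = Nx x + Nx y.
Proof. rewrite /Nx -big_split /=; apply: eq_bigr=> v _; by rewrite ffunE mulnDl. Qed.
Lemma Nx0 : Nx (ev0 _) = 0.
Proof. by rewrite /Nx big1 // => v _; rewrite ffunE. Qed.
Lemma Nx_e1 v : Nx (e1 v) = sv v.
Proof.
rewrite /Nx (bigD1 v) //= big1 ?ffunE ?eqxx ?mul1n ?addn0 // => w /negbTE hw.
by rewrite ffunE hw.
Qed.
Lemma deg_Pi x : evdeg (Pi x) = evdeg x.
Proof.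
rewrite /evdeg (partition_big tau xpredT) //=; apply: eq_bigr => c _; by rewrite ffunE.
Qed.
Lemma Pi_dvd x y : evdvd x y -> evdvd (Pi x) (Pi y).
Proof. move=> h c; rewrite !ffunE; apply: leq_sum => v _; exact: h. Qed.

Lemma eval_eq (x y : expvec J') : Pi x = Pi y -> Nx x = Nx y -> eval_atoms x = eval_atoms y.
Proof.
move=> h1 h2; have [E1 _] := lift_pio i0 (eval_atoms x); have [E2 _] := lift_pio i0 (eval_atoms y).
by rewrite E1 E2 !pio_eval h1 !Nx_eval h2.
Qed.
Lemma eval_Pi (x y : expvec J') : eval_atoms x = eval_atoms y ->
  eval_atoms (Pi x) = eval_atoms (Pi y) /\ Nx x = Nx y.
Proof. by move=> h; rewrite -!pio_eval -!Nx_eval h. Qed.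

Lemma eval_eq2 (x y : expvec J') : eval_atoms (Pi x) = eval_atoms (Pi y) -> Nx x = Nx y ->
  eval_atoms x = eval_atoms y.
Proof.
move=> h1 h2; have [E1 _] := lift_pio i0 (eval_atoms x); have [E2 _] := lift_pio i0 (eval_atoms y).
by rewrite E1 E2 !pio_eval h1 !Nx_eval h2.
Qed.

Definition Rc (c : J) : nat := bb c i0.
Lemma Rc_le c : Rc c <= Bnd.
Proof. by apply: bnd_le; rewrite mem_nth. Qed.
Lemma sv_le v : sv v <= Rc (tau v).
Proof. by have [_ h] := Av_lift v. Qed.

Definition Lw := (Bnd).*2.+1.
Definition W (v : J') : nat := Lw * (tau v).+1 * sv v + sv v * sv v.
Definition phi (x : expvec J') : nat := \sum_v x v * W v.
Lemma phi_add x y : phi (evadd x y) = phi x + phi y.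
Proof. rewrite /phi -big_split /=; apply: eq_bigr=> v _; by rewrite ffunE mulnDl. Qed.
Lemma phi_e1 v : phi (e1 v) = W v.
Proof.
rewrite /phi (bigD1 v) //= big1 ?ffunE ?eqxx ?mul1n ?addn0 // => w /negbTE hw.
by rewrite ffunE hw.
Qed.

Definition key (x : expvec J') := map x (enum J').
Definition lt1 (x y : expvec J') : Prop :=
  phi y < phi x \/ (phi x = phi y /\ lexb (key x) (key y)).
Definition ltS (x y : expvec J') : Prop := lt0 (Pi x) (Pi y) \/ (Pi x = Pi y /\ lt1 x y).

Lemma key_inj x y : key x = key y -> x = y.
Proof. move=> h; apply/ffunP=> v; apply: (map_eq_in h); by rewrite mem_enum. Qed.

Lemma lt1_irr x : ~ lt1 x x.
Proof. by case=> [|[_]]; rewrite ?ltnn // /key lexb_irr. Qed.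
Lemma lt1_trans x y z : lt1 x y -> lt1 y z -> lt1 x z.
Proof.
rewrite /lt1 /key => h1 h2; case: h1 => [h1|[e1 h1]]; case: h2 => [h2|[e2 h2]].
- by left; apply: ltn_trans h1.
- by left; rewrite -e2.
- by left; rewrite e1.
- by right; split; [rewrite e1 | exact: lexb_trans h1 h2].
Qed.
Lemma lt1_total x y : x <> y -> lt1 x y \/ lt1 y x.
Proof.
move=> hne; rewrite /lt1; case: (ltngtP (phi x) (phi y)) => e.
- by right; left.
- by left; left.
- have : key x != key y by apply/eqP => /key_inj.
  move/lexb_total => /orP [h|h]; [left|right]; right; split => //.
Qed.
Lemma lt1_add x y z : lt1 x y -> lt1 (evadd x z) (evadd y z).
Proof.
rewrite /lt1 !phi_add => -[h|[e h]]; first by left; rewrite ltn_add2r.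
right; split; first by rewrite e.
have -> : key (evadd x z) = map (fun v => x v + z v) (enum J') by apply: eq_map => v; rewrite ffunE.
have -> : key (evadd y z) = map (fun v => y v + z v) (enum J') by apply: eq_map => v; rewrite ffunE.
exact: lexb_add.
Qed.

Lemma adm_ltS : admissible ltS.
Proof.
case: adm0 => irr0 tr0 tot0 add0 mn0.
split.
- move=> x [h|[_ h]]; [exact: irr0 h | exact: lt1_irr h].
- move=> x y z [h1|[e1 h1]] [h2|[e2 h2]].
  + by left; apply: tr0 h1 h2.
  + by left; rewrite -e2.
  + by left; rewrite e1.
  + by right; split; [rewrite e1 | exact: lt1_trans h1 h2].
- move=> x y hne; case: (eqVneq (Pi x) (Pi y)) => e.
  + case: (lt1_total hne) => h; [left|right]; right; split => //.
  + have hne' : Pi x <> Pi y by apply/eqP.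
    by case: (tot0 _ _ hne') => h; [left|right]; left.
  - move=> x y z [h|[e h]].
  + by left; rewrite !Pi_add; apply: add0.
  + by right; split; [rewrite !Pi_add e | exact: lt1_add].
- move=> x hx; left; rewrite Pi0; apply: mn0 => E; apply: hx; apply: evdeg_eq0.
  by rewrite -deg_Pi E evdeg0.
Qed.

Definition e2 (v w : J') := evadd (e1 v) (e1 w).

Lemma move_ok v w v' w' : tau v' = tau v -> tau w' = tau w -> sv v' + sv w' = sv v + sv w ->
  W v + W w < W v' + W w' ->
  [/\ eval_atoms (e2 v w) = eval_atoms (e2 v' w'), ltS (e2 v' w') (e2 v w),
      Pi (e2 v w) = Pi (e2 v' w'), Nx (e2 v w) = Nx (e2 v' w') & phi (e2 v w) < phi (e2 v' w')].
Proof.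
move=> t1 t2 s12 w12.
have hP : Pi (e2 v w) = Pi (e2 v' w') by rewrite /e2 !Pi_add !Pi_e1 t1 t2.
have hN : Nx (e2 v w) = Nx (e2 v' w') by rewrite /e2 !Nx_add !Nx_e1.
have hp : phi (e2 v w) < phi (e2 v' w') by rewrite /e2 !phi_add !phi_e1.
split => //; first exact: eval_eq.
by right; split => //; left.
Qed.

Lemma deg_e2 v w : evdeg (e2 v w) = 2.
Proof. by rewrite /e2 evdeg_add !evdeg_e1. Qed.

Definition Imp (x : expvec J') := exists v w v' w', [/\ evdvd (e2 v w) x, tau v' = tau v, tau w' = tau w,
  sv v' + sv w' = sv v + sv w & W v + W w < W v' + W w'].

Definition NP1 (x : expvec J') := forall v w, 0 < x v -> 0 < x w -> tau v < tau w -> 0 < sv v ->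
  sv w < Rc (tau w) -> False.
Definition NP2 (x : expvec J') := forall v w, 0 < x v -> 0 < x w -> (v != w \/ 1 < x v) -> tau v = tau w ->
  0 < sv v -> sv v < Rc (tau v) -> 0 < sv w -> sv w < Rc (tau w) -> False.

Lemma viol1 v w : tau v < tau w -> 0 < sv v -> sv w < Rc (tau w) ->
  exists v' w', [/\ tau v' = tau v, tau w' = tau w, sv v' + sv w' = sv v + sv w & W v + W w < W v' + W w'].
Proof.
move=> ht hs hw.
have h1 : (sv v).-1 <= bb (tau v) i0 by have := sv_le v; rewrite /Rc; lia.
have h2 : (sv w).+1 <= bb (tau w) i0 by move: hw; rewrite /Rc.
case: (exists_var h1) => v' [tv' sv' _]; case: (exists_var h2) => w' [tw' sw' _].
exists v', w'; split => //; first by rewrite sv' sw'; lia.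
rewrite /W tv' tw' sv' sw'.
have hL : 2 * (sv v) <= Lw.
  rewrite /Lw; have := sv_le v; have := Rc_le (tau v); lia.
move: (sv v) (sv w) (tau v : nat) (tau w : nat) hs ht hL => s u c1 c2 hs' hc hL'.
have hc' : Lw * c1.+1 + Lw <= Lw * c2.+1.
  by rewrite addnC -mulnS leq_mul2l ltnS hc orbT.
set P1 := Lw * c1.+1 in hc' *; set P2 := Lw * c2.+1 in hc' *.
case: s hs' hL' => // t _ hL'.
have -> : P1 * t.+1 = P1 * t + P1 by rewrite mulnS addnC.
have -> : P2 * u.+1 = P2 * u + P2 by rewrite mulnS addnC.
nia.
Qed.

Lemma viol2 v w : tau v = tau w -> sv v < Rc (tau v) -> 0 < sv w -> sv w <= sv v ->
  exists v' w', [/\ tau v' = tau v, tau w' = tau w, sv v' + sv w' = sv v + sv w & W v + W w < W v' + W w'].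
Proof.
move=> ht hv hw hwv.
have h1 : (sv v).+1 <= bb (tau v) i0 by move: hv; rewrite /Rc.
have h2 : (sv w).-1 <= bb (tau w) i0 by have := sv_le w; rewrite /Rc; lia.
case: (exists_var h1) => v' [tv' sv' _]; case: (exists_var h2) => w' [tw' sw' _].
exists v', w'; split => //; first by rewrite sv' sw'; lia.
rewrite /W tv' tw' sv' sw' ht.
move: (sv v) (sv w) hw hwv => s u hu hus.
set P := Lw * (tau w).+1.
case: u hu hus => // u _ hus /=.
have -> : P * s.+1 = P * s + P by rewrite mulnS addnC.
have -> : P * u.+1 = P * u + P by rewrite mulnS addnC.
nia.
Qed.

Lemma NP_of x : ~ Imp x -> NP1 x /\ NP2 x.
Proof.
move=> hI; split.
- move=> v w hv hw ht hs hr; apply: hI.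
  case: (viol1 ht hs hr) => v' [w' [t1 t2 s12 w12]].
  exists v, w, v', w'; split => //; apply: evdvd_e2 => //; left.
  by apply/eqP => E; move: ht; rewrite E ltnn.
- move=> v w hv hw hvw ht hv1 hv2 hw1 hw2; apply: hI.
  case: (leqP (sv w) (sv v)) => hle.
  + case: (viol2 ht hv2 hw1 hle) => v' [w' [t1 t2 s12 w12]].
    exists v, w, v', w'; split => //; exact: evdvd_e2.
  + have hle' : sv v <= sv w by apply: ltnW.
    case: (viol2 (esym ht) hw2 hv1 hle') => v' [w' [t1 t2 s12 w12]].
    exists w, v, v', w'; split => //.
    rewrite /e2 evaddC; apply: evdvd_e2 => //.
Qed.


Lemma pos_Pi (x : expvec J') c : 0 < Pi x c -> exists v, tau v = c /\ 0 < x v.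
Proof.
rewrite ffunE => h; apply: NNPP => hn; move: h; rewrite big1 // => v /eqP hv.
case: (posnP (x v)) => // hp; exfalso; apply: hn; by exists v.
Qed.
Lemma pos_Pi' (x : expvec J') v : 0 < x v -> 0 < Pi x (tau v).
Proof. move=> h; rewrite ffunE (bigD1 v) //=; exact: leq_trans h (leq_addr _ _). Qed.
Lemma NP_sub (x' x : expvec J') : evdvd x' x -> NP1 x -> NP2 x -> NP1 x' /\ NP2 x'.
Proof.
move=> hd h1 h2; split.
- move=> v w hv hw; apply: h1; [exact: leq_trans hv (hd v) | exact: leq_trans hw (hd w)].
- move=> v w hv hw hvw; apply: h2; [exact: leq_trans hv (hd v) | exact: leq_trans hw (hd w)|].
  case: hvw => [|h]; [by left | right; exact: leq_trans h (hd v)].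
Qed.

Lemma Nx_ge (y : expvec J') v : y v * sv v <= Nx y.
Proof. by rewrite /Nx (bigD1 v) //= leq_addr. Qed.

Lemma side (y : expvec J') (cs : J) vy : NP1 y -> NP2 y -> (forall v, 0 < y v -> tau v <= cs) -> 0 < y vy -> tau vy = cs ->
  (forall v, 0 < y v -> tau v = cs -> sv v <= sv vy) -> sv vy < Rc cs -> Nx y <= sv vy.
Proof.
move=> h1 h2 hc hy ht hm hr.
have key : forall v, 0 < y v -> 0 < sv v -> tau v = cs /\ sv v < Rc (tau v).
  move=> v hv hs.
  have tv : tau v = cs.
    have := hc v hv; rewrite leq_eqVlt => /orP [/eqP E|hlt]; first exact: val_inj.
    by exfalso; apply: (h1 v vy hv hy); rewrite ?ht.
  split => //; rewrite tv; exact: leq_ltn_trans (hm v hv tv) hr.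
case: (classic (exists u, 0 < y u /\ 0 < sv u)) => [[u [hu hsu]]|hn].
- have [tu ru] := key u hu hsu.
  have y1 : y u = 1.
    case: (ltngtP (y u) 1) => // hgt; first by move: hu hgt; lia.
    by exfalso; apply: (h2 u u hu hu (or_intror hgt) erefl hsu ru hsu ru).
  rewrite /Nx (bigD1 u) //= big1 ?addn0; first by rewrite y1 mul1n; apply: hm.
  move=> w hw; case: (posnP (y w)) => [->|hyw] //; case: (posnP (sv w)) => [->|hsw]; first by rewrite muln0.
  exfalso; have [tw rw] := key w hyw hsw.
  have huw : u != w by rewrite eq_sym.
  by apply: (h2 u w hu hyw (or_introl huw) _ hsu ru hsw rw); rewrite tu tw.
- rewrite /Nx big1 // => v _; case: (posnP (y v)) => [->|hv] //.
  case: (posnP (sv v)) => [->|hs]; [by rewrite muln0 | exfalso; apply: hn; by exists v].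
Qed.

Lemma uniq_canon d : forall x y : expvec J', evdeg x = d -> NP1 x -> NP2 x -> NP1 y -> NP2 y ->
  Pi x = Pi y -> Nx x = Nx y -> x = y.
Proof.
elim: d => [|d IH] x y hd hx1 hx2 hy1 hy2 hP hN.
  have ex := evdeg_eq0 hd.
  have : evdeg y = 0 by rewrite -deg_Pi -hP deg_Pi.
  by move/evdeg_eq0 => ey; rewrite ex ey.
have hx0 : Pi x <> ev0 _ by move=> E; have := deg_Pi x; rewrite E evdeg0 hd.
case: (evdeg_pos hx0) => c0 hc0.
case: (@arg_maxnP _ c0 (fun c : J => 0 < Pi x c) (fun c : J => (c : nat)) hc0) => cs hcs hmax.
have hcx : forall v, 0 < x v -> tau v <= cs := fun v hv => hmax _ (pos_Pi' hv).
have hcy : forall v, 0 < y v -> tau v <= cs.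
  by move=> v hv; apply: hmax; rewrite hP; exact: pos_Pi' hv.
case: (pos_Pi hcs) => vx0 [tx0 px0].
have hcsy : 0 < Pi y cs by rewrite -hP.
case: (pos_Pi hcsy) => vy0 [ty0 py0].
have hvx0 : (0 < x vx0) && (tau vx0 == cs) by rewrite px0 tx0 eqxx.
case: (@arg_maxnP _ vx0 (fun v => (0 < x v) && (tau v == cs)) sv hvx0) => vx /andP [hvx /eqP tvx] hmx.
have hvy0 : (0 < y vy0) && (tau vy0 == cs) by rewrite py0 ty0 eqxx.
case: (@arg_maxnP _ vy0 (fun v => (0 < y v) && (tau v == cs)) sv hvy0) => vy /andP [hvy /eqP tvy] hmy.
have hmx' : forall v, 0 < x v -> tau v = cs -> sv v <= sv vx.
  by move=> v h1 h2; apply: hmx; rewrite h1 h2 eqxx.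
have hmy' : forall v, 0 < y v -> tau v = cs -> sv v <= sv vy.
  by move=> v h1 h2; apply: hmy; rewrite h1 h2 eqxx.
have esv : sv vx = sv vy.
  case: (ltngtP (sv vx) (sv vy)) => // hlt; exfalso.
  - have hr : sv vx < Rc cs by apply: leq_trans hlt _; rewrite -tvy; apply: sv_le.
    have := side hx1 hx2 hcx hvx tvx hmx' hr; have := Nx_ge y vy; rewrite hN.
    have := leq_pmull (sv vy) hvy. lia.
  - have hr : sv vy < Rc cs by apply: leq_trans hlt _; rewrite -tvx; apply: sv_le.
    have := side hy1 hy2 hcy hvy tvy hmy' hr; have := Nx_ge x vx; rewrite hN.
    have := leq_pmull (sv vx) hvx. lia.
have evv : vx = vy.
  apply: Av_inj; have [A1 _] := Av_lift vx; have [A2 _] := Av_lift vy.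
  by rewrite A1 A2 tvx tvy esv.
subst vy.
have [x1 Ex] : exists x1, x = evadd (e1 vx) x1 := ex_intro _ _ (evdvd_sub (evdvd_e1 hvx)).
have [y1 Ey] : exists y1, y = evadd (e1 vx) y1 := ex_intro _ _ (evdvd_sub (evdvd_e1 hvy)).
have [hx1' hx2'] : NP1 x1 /\ NP2 x1.
  by apply: (NP_sub _ hx1 hx2); rewrite Ex evaddC; apply: evdvd_add.
have [hy1' hy2'] : NP1 y1 /\ NP2 y1.
  by apply: (NP_sub _ hy1 hy2); rewrite Ey evaddC; apply: evdvd_add.
suff E : x1 = y1 by rewrite Ex Ey E.
apply: IH => //.
- by move: hd; rewrite Ex evdeg_add evdeg_e1 add1n => -[].
- by apply: (@evaddI _ _ _ (Pi (e1 vx))); rewrite -!Pi_add -Ex -Ey.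
- by move: hN; rewrite Ex Ey !Nx_add => /eqP; rewrite eqn_add2l => /eqP.
Qed.

Definition Wmax := \max_v W v.
Lemma phi_le (y : expvec J') : phi y <= evdeg y * Wmax.
Proof.
rewrite /phi /evdeg big_distrl /=; apply: leq_sum => v _; by rewrite leq_mul2l leq_bigmax orbT.
Qed.

Lemma descent (x : expvec J') : NP1 x -> NP2 x -> forall y : expvec J', Pi y = Pi x -> Nx y = Nx x -> y = x \/ phi y < phi x.
Proof.
move=> h1 h2.
suff H : forall k (y : expvec J'), evdeg x * Wmax - phi y < k -> Pi y = Pi x -> Nx y = Nx x -> y = x \/ phi y < phi x.
  by move=> y; apply: (H (evdeg x * Wmax - phi y).+1 y (ltnSn _)).
elim=> // k IH y hk hP hN.
case: (classic (Imp y)) => [[v [w [v' [w' [hd t1 t2 s12 w12]]]]]|hI].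
- case: (move_ok t1 t2 s12 w12) => _ _ mP mN mphi.
  have [r Er] : exists r, y = evadd (e2 v w) r := ex_intro _ _ (evdvd_sub hd).
  pose y1 := evadd (e2 v' w') r.
  have hP1 : Pi y1 = Pi x by rewrite -hP Er /y1 [Pi (evadd (e2 v' w') r)]Pi_add [Pi (evadd (e2 v w) r)]Pi_add mP.
  have hN1 : Nx y1 = Nx x by rewrite -hN Er /y1 [Nx (evadd (e2 v' w') r)]Nx_add [Nx (evadd (e2 v w) r)]Nx_add mN.
  have hphi : phi y < phi y1 by rewrite Er /y1 [phi (evadd (e2 v' w') r)]phi_add [phi (evadd (e2 v w) r)]phi_add ltn_add2r.
  have hb : phi y1 <= evdeg x * Wmax by have := phi_le y1; rewrite -deg_Pi hP1 deg_Pi.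
  case: (IH y1 _ hP1 hN1) => [|E|hlt]; first by lia.
  + by right; rewrite -E.
  + by right; exact: ltn_trans hphi hlt.
- have [n1 n2] := NP_of hI.
  by left; apply: (uniq_canon erefl n1 n2 h1 h2 hP hN).
Qed.


Lemma lift_sub : forall n (u : expvec J) (x : expvec J'), evdeg u = n -> evdvd u (Pi x) ->
  exists x', evdvd x' x /\ Pi x' = u.
Proof.
elim=> [|n IH] u x hd hdv.
  exists (ev0 _); split; [by move=> v; rewrite ffunE | by rewrite Pi0 (evdeg_eq0 hd)].
have hu0 : u <> ev0 _ by move=> E; move: hd; rewrite E evdeg0.
case: (evdeg_pos hu0) => c hc.
have : 0 < Pi x c := leq_trans hc (hdv c).
case/pos_Pi => v [tv hv].
have [u1 Eu] : exists u1, u = evadd (e1 c) u1 := ex_intro _ _ (evdvd_sub (evdvd_e1 hc)).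
have [x1 Ex] : exists x1, x = evadd (e1 v) x1 := ex_intro _ _ (evdvd_sub (evdvd_e1 hv)).
have hd1 : evdeg u1 = n by move: hd; rewrite Eu evdeg_add evdeg_e1 add1n => -[].
have hdv1 : evdvd u1 (Pi x1).
  move=> c'; move: (hdv c'); rewrite Eu Ex Pi_add Pi_e1 tv !ffunE; lia.
case: (IH u1 x1 hd1 hdv1) => x1' [h1 h2].
exists (evadd (e1 v) x1'); split.
- move=> w; rewrite Ex !ffunE; move: (h1 w); lia.
- by rewrite Pi_add Pi_e1 tv h2 Eu.
Qed.

Definition SR (u : expvec J) : nat := \sum_c u c * Rc c.
Lemma SR_eval u : eval_atoms u i0 = SR u.
Proof. by rewrite ffunE. Qed.
Lemma SR_add u w : SR (evadd u w) = SR u + SR w.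
Proof. rewrite /SR -big_split /=; apply: eq_bigr=> c _; by rewrite ffunE mulnDl. Qed.
Lemma SR_e1 c : SR (e1 c) = Rc c.
Proof.
rewrite /SR (bigD1 c) //= big1 ?ffunE ?eqxx ?mul1n ?addn0 // => w /negbTE hw.
by rewrite ffunE hw.
Qed.
Lemma Nx_le_SR x : Nx x <= SR (Pi x).
Proof.
have := congr1 (fun t : expvec I => t i0) (pio_eval x); rewrite /= SR_eval ffunE eqxx mul1n Nx_eval => <-.
exact: leq_addl.
Qed.

Lemma lift_N : forall n (u : expvec J) N, evdeg u = n -> N <= SR u -> exists y, Pi y = u /\ Nx y = N.
Proof.
elim=> [|n IH] u N hd hN.
  have E := evdeg_eq0 hd; exists (ev0 _); split; first by rewrite Pi0.
  rewrite Nx0; move: hN; rewrite E /SR big1 ?leqn0 => [/eqP -> //|c _]; by rewrite ffunE.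
have hu0 : u <> ev0 _ by move=> E; move: hd; rewrite E evdeg0.
case: (evdeg_pos hu0) => c hc.
have [u1 Eu] : exists u1, u = evadd (e1 c) u1 := ex_intro _ _ (evdvd_sub (evdvd_e1 hc)).
have hd1 : evdeg u1 = n by move: hd; rewrite Eu evdeg_add evdeg_e1 add1n => -[].
have hs : minn N (Rc c) <= bb c i0 by rewrite /Rc geq_minr.
case: (exists_var hs) => v [tv sv' _].
have hN1 : N - minn N (Rc c) <= SR u1 by move: hN; rewrite Eu SR_add SR_e1; lia.
case: (IH u1 _ hd1 hN1) => y1 [h1 h2].
exists (evadd (e1 v) y1); split.
- by rewrite Pi_add Pi_e1 tv h1 Eu.
- rewrite Nx_add Nx_e1 sv' h2; lia.
Qed.

Definition M2 : seq (expvec J') :=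
  map (fun u : {ffun J' -> 'I_3} => [ffun v => (u v : nat)]) (enum {ffun J' -> 'I_3}).
Lemma mem_M2 (z : expvec J') : evdeg z <= 2 -> z \in M2.
Proof.
move=> h; apply/mapP; exists [ffun v => inord (z v)]; first by rewrite mem_enum.
apply/ffunP=> v; rewrite !ffunE inordK // ltnS; apply: leq_trans h.
by rewrite /evdeg (bigD1 v) //= leq_addr.
Qed.

Definition Pl (p : expvec J' * expvec J') : Prop :=
  [/\ evdeg p.1 <= 2, evdeg p.2 <= 2, eval_atoms p.1 = eval_atoms p.2 & ltS p.2 p.1].
Definition Lam : seq (expvec J' * expvec J') :=
  [seq p <- [seq (z1, z2) | z1 <- M2, z2 <- M2] | decB (Pl p)].
Lemma mem_Lam p : p \in Lam <-> Pl p.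
Proof.
rewrite mem_filter; split => [/andP [/decBP h _] //| h].
apply/andP; split; first by apply/decBP.
case: p h => z1 z2 [h1 h2 _ _]; apply: allpairs_f; exact: mem_M2.
Qed.

Lemma min_main (x : expvec J') : (forall p, p \in Lam -> ~ evdvd p.1 x) ->
  forall y, eval_atoms x = eval_atoms y -> x = y \/ ltS x y.
Proof.
move=> hx y hxy.
have hI : ~ Imp x.
  case=> v [w [v' [w' [hd t1 t2 s12 w12]]]].
  case: (move_ok t1 t2 s12 w12) => mE mlt _ _ _.
  apply: (hx (e2 v w, e2 v' w')) => //; apply/mem_Lam; split => //=; by rewrite deg_e2.
have [n1 n2] := NP_of hI.
case: (eqVneq x y) => [->|hne]; first by left.
have hne' : x <> y by apply/eqP.
case: adm_ltS => irr tr tot _ _.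
case: (tot _ _ hne') => [h|h]; first by right.
exfalso.
have [hPe hNe] := eval_Pi hxy.
case: h => [h|[hP h]].
- case: (adm0) => irr0 tr0 _ _ _.
  case: (classic (exists p0, p0 \in Lam0 /\ evdvd p0.1 (Pi x))) => [[[u u'] [hp0 hdv]]|hn].
  + case: (HL0 hp0) => /= hs hl; case: (Hdeg0 hp0) => /= du du'.
    case: (lift_sub erefl hdv) => x' [hx' hPx'].
    have hle : Nx x' <= SR u'.
      by apply: leq_trans (Nx_le_SR x') _; rewrite hPx' -!SR_eval hs.
    case: (lift_N erefl hle) => y' [hPy' hNy'].
    apply: (hx (x', y')) hx'; apply/mem_Lam; split => /=.
    * by rewrite -deg_Pi hPx'.
    * by rewrite -deg_Pi hPy'.
    * by apply: eval_eq2; [rewrite hPx' hPy' | rewrite hNy'].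
    * by left; rewrite hPx' hPy'.
  + have hn' : forall p, p \in Lam0 -> ~ evdvd p.1 (Pi x) by move=> p hp hd; apply: hn; exists p.
    case: (@Hmin0 (Pi x) hn' (Pi y) hPe) => [E|h']; first by rewrite E in h; exact: (irr0 _ h).
    exact: (irr0 _ (tr0 _ _ _ h h')).
- case: (descent n1 n2 hP (esym hNe)) => [E|hlt]; first by apply: hne'; rewrite E.
  case: h => [h|[e _]]; lia.
Qed.

Lemma step_qgb : has_quadratic_groebner (BT (fopt f i0)).
Proof.
exists a'; split; first exact: uniq_a'.
split; first exact: atoms_a'.
exists ltS, Lam; split.
- exact: adm_ltS.
- by move=> p /mem_Lam [_ _ h1 h2].
- exact: min_main.
- by move=> p /mem_Lam [h1 h2 _ _].
Qed.
End Step2.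

Lemma step (G : zmodType) (I : finType) (f : I -> G) (i0 : I) :
  has_quadratic_groebner (BT f) -> has_quadratic_groebner (BT (fopt f i0)).
Proof.
case=> a [ua [Hat [lt0 [Lam0 [adm0 HL0 Hmin0 Hdeg0]]]]].
exact: (step_qgb i0 ua Hat adm0 HL0 Hmin0 Hdeg0).
Qed.

Lemma sum_cast n m (h : n = m) (F : 'I_m -> nat) :
  \sum_(j : 'I_n) F (cast_ord h j) = \sum_(j : 'I_m) F j.
Proof. by case: m / h F => F; apply: eq_bigr => j _; rewrite cast_ord_id. Qed.

Section Transport.
Variables (G : zmodType) (I I' : finType) (f : I -> G) (f' : I' -> G) (e : I' -> I).
Hypotheses (be : bijective e) (hf : forall i', f' i' = f (e i')).

Definition Fe (al : expvec I) : expvec I' := [ffun i' => al (e i')].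
Lemma Fe_add x y : Fe (evadd x y) = evadd (Fe x) (Fe y).
Proof. by apply/ffunP=> i; rewrite !ffunE. Qed.
Lemma Fe0 : Fe (ev0 _) = ev0 _.
Proof. by apply/ffunP=> i; rewrite !ffunE. Qed.
Lemma Fe_inj : injective Fe.
Proof.
case: be => g h1 h2 x y /ffunP h; apply/ffunP=> i.
by move: (h (g i)); rewrite !ffunE h2.
Qed.
Lemma Fe_surj (b : expvec I') : exists al, b = Fe al.
Proof.
case: be => g h1 h2; exists [ffun i => b (g i)]; apply/ffunP=> i'.
by rewrite !ffunE h1.
Qed.
Lemma BT_Fe al : BT f' (Fe al) = BT f al.
Proof.
rewrite /BT (reindex e (onW_bij _ be)) /=; congr (_ == _).
by apply: eq_bigr => i' _; rewrite ffunE hf.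
Qed.
Lemma atom_Fe al : is_atom (BT f') (Fe al) <-> is_atom (BT f) al.
Proof.
split.
- case=> h1 [h2 h3]; split; first by rewrite -BT_Fe.
  split; first by move=> E; apply: h2; rewrite E Fe0.
  move=> u v hu hv E.
  case: (h3 (Fe u) (Fe v)); rewrite ?BT_Fe // ?E ?Fe_add //.
  + by rewrite -Fe0 => /Fe_inj; left.
  + by rewrite -Fe0 => /Fe_inj; right.
- case=> h1 [h2 h3]; split; first by rewrite BT_Fe.
  split; first by rewrite -Fe0 => /Fe_inj.
  move=> u v hu hv E.
  case: (Fe_surj u) => u0 Eu; case: (Fe_surj v) => v0 Ev; subst u v.
  rewrite !BT_Fe in hu hv.
  rewrite -Fe_add in E; move/Fe_inj: E => E.
  case: (h3 u0 v0 hu hv E) => ->; rewrite Fe0; [by left | by right].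
Qed.

Variables (a : seq (expvec I)) (ua : uniq a) (Hat : forall t, is_atom (BT f) t <-> t \in a).
Variables (lt0 : expvec 'I_(size a) -> expvec 'I_(size a) -> Prop)
  (Lam0 : seq (expvec 'I_(size a) * expvec 'I_(size a))).
Hypotheses (adm0 : admissible lt0)
 (HL0 : forall p, p \in Lam0 -> eval_atoms p.1 = eval_atoms p.2 /\ lt0 p.2 p.1)
 (Hmin0 : forall x, (forall p, p \in Lam0 -> ~ evdvd p.1 x) ->
     forall y, eval_atoms x = eval_atoms y -> x = y \/ lt0 x y)
 (Hdeg0 : forall p, p \in Lam0 -> evdeg p.1 <= 2 /\ evdeg p.2 <= 2).

Definition aF := map Fe a.
Lemma szE : size aF = size a.
Proof. by rewrite size_map. Qed.
Definition Cc (x : expvec 'I_(size aF)) : expvec 'I_(size a) := [ffun j => x (cast_ord (esym szE) j)].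
Definition Dc (y : expvec 'I_(size a)) : expvec 'I_(size aF) := [ffun j => y (cast_ord szE j)].
Lemma CD y : Cc (Dc y) = y.
Proof. by apply/ffunP=> j; rewrite !ffunE cast_ordKV. Qed.
Lemma DC x : Dc (Cc x) = x.
Proof. by apply/ffunP=> j; rewrite !ffunE cast_ordK. Qed.
Lemma Cc_add x y : Cc (evadd x y) = evadd (Cc x) (Cc y).
Proof. by apply/ffunP=> i; rewrite !ffunE. Qed.
Lemma Cc0 : Cc (ev0 _) = ev0 _.
Proof. by apply/ffunP=> i; rewrite !ffunE. Qed.
Lemma Cc_inj : injective Cc.
Proof. by move=> x y h; rewrite -(DC x) -(DC y) h. Qed.
Lemma deg_Dc y : evdeg (Dc y) = evdeg y.
Proof. by rewrite /evdeg -(sum_cast szE); apply: eq_bigr => j _; rewrite ffunE. Qed.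
Lemma dvd_Dc u v : evdvd u v -> evdvd (Dc u) (Dc v).
Proof. by move=> h j; rewrite !ffunE. Qed.
Lemma eval_Cc x : eval_atoms x = Fe (eval_atoms (Cc x)).
Proof.
apply/ffunP=> i'; rewrite !ffunE.
rewrite -(sum_cast (esym szE) (fun j : 'I_(size aF) => x j * nth (ev0 _) aF j i')).
apply: eq_bigr => j _; rewrite ffunE /aF (nth_map (ev0 _)); last by rewrite /= ltn_ord.
by rewrite ffunE.
Qed.

Definition ltT (x y : expvec 'I_(size aF)) := lt0 (Cc x) (Cc y).
Definition LamT := map (fun p => (Dc p.1, Dc p.2)) Lam0.

Lemma transport_qgb : has_quadratic_groebner (BT f').
Proof.
exists aF; split; first by rewrite map_inj_uniq //; exact: Fe_inj.
split.
  move=> t; case: (Fe_surj t) => t0 ->; rewrite atom_Fe Hat /aF mem_map //; exact: Fe_inj.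
case: adm0 => irr0 tr0 tot0 add0 mn0.
exists ltT, LamT; split.
- split.
  + move=> x; exact: irr0.
  + move=> x y z; exact: tr0.
  + move=> x y hne; apply: tot0 => /Cc_inj; exact: hne.
  + move=> x y z h; rewrite /ltT !Cc_add; exact: add0.
  + move=> x hx; rewrite /ltT Cc0; apply: mn0; rewrite -Cc0 => /Cc_inj; exact: hx.
- move=> p /mapP [q hq ->] /=; case: (HL0 hq) => h1 h2.
  by rewrite /ltT !eval_Cc !CD h1; split.
- move=> x hx y hxy.
  have hx' : forall p, p \in Lam0 -> ~ evdvd p.1 (Cc x).
    move=> p hp hd; apply: (hx (Dc p.1, Dc p.2)); first by apply/mapP; exists p.
    by rewrite /= -(DC x); apply: dvd_Dc.
  have e2 : eval_atoms (Cc x) = eval_atoms (Cc y) by apply: Fe_inj; rewrite -!eval_Cc.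
  case: (Hmin0 hx' e2) => [/Cc_inj ->|h]; [by left | by right].
- move=> p /mapP [q hq ->] /=; rewrite !deg_Dc; exact: Hdeg0.
Qed.
End Transport.

Lemma transport (G : zmodType) (I I' : finType) (f : I -> G) (f' : I' -> G) (e : I' -> I) :
  bijective e -> (forall i', f' i' = f (e i')) ->
  has_quadratic_groebner (BT f) -> has_quadratic_groebner (BT f').
Proof.
move=> be hf; case=> a [ua [Hat [lt0 [Lam0 [adm0 HL0 Hmin0 Hdeg0]]]]].
exact: (transport_qgb be hf ua Hat adm0 HL0 Hmin0 Hdeg0).
Qed.


Section Assemble.
Variables (G : zmodType) (s : seq G) (us : uniq s).
Hypothesis H0 : has_quadratic_groebner (BT (fun j : 'I_(size s) => nth 0%R s j)).

Lemma inj_case m (g : 'I_m -> G) : injective g -> (forall i, g i \in s) ->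
  (forall x, x \in s -> exists i, g i = x) -> has_quadratic_groebner (BT g).
Proof.
move=> ig hin hsur.
pose e := fun i => Ordinal (elimT idP (etrans (index_mem (g i) s) (hin i)) : index (g i) s < size s).
have he : forall i, g i = nth 0%R s (e i) by move=> i; rewrite /= nth_index.
have einj : injective e by move=> i j h; apply: ig; rewrite !he h.
have esur : forall j, exists i, e i = j.
  move=> j; case: (hsur (nth 0%R s j)); first by rewrite mem_nth.
  move=> i hi; exists i; apply: val_inj; rewrite /= hi index_uniq //.
have esur' : forall j, exists i, e i == j by move=> j; case: (esur j) => i hi; exists i; apply/eqP.
have be : bijective e.
  exists (fun j => xchoose (esur' j)).
  - by move=> i; apply: einj; apply/eqP; exact: (xchooseP (esur' (e i))).
  - by move=> j; apply/eqP; exact: (xchooseP (esur' j)).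
exact: (transport be he H0).
Qed.

Lemma assemble : forall m (g : 'I_m -> G), (forall i, g i \in s) ->
  (forall x, x \in s -> exists i, g i = x) -> has_quadratic_groebner (BT g).
Proof.
elim=> [|m IH] g hin hsur.
  by apply: inj_case => //; case.
case: (boolP (injectiveb g)) => [/injectiveP ig|/injectivePn [i1 [i2 hne heq]]].
  exact: inj_case.
case: (unliftP i2 i1) => [j1 Ei1|Ei1]; last by rewrite Ei1 eqxx in hne.
pose g' := fun j : 'I_m => g (lift i2 j).
have H' : has_quadratic_groebner (BT g').
  apply: IH.
  - move=> j; exact: hin.
  - move=> x hx; case: (hsur x hx) => i hi.
    case: (unliftP i2 i) => [j Ej|Ej]; first by exists j; rewrite /g' -Ej.
    by exists j1; rewrite /g' -Ei1 heq -Ej.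
have H2 := step j1 H'.
apply: (@transport _ _ _ _ g (fun i => unlift i2 i) _ _ H2).
- exists (fun o => if o is Some j then lift i2 j else i2).
  + by move=> i; case: (unliftP i2 i) => [j ->|->].
  + by move=> [j|] /=; [rewrite liftK | rewrite unlift_none].
- move=> i; case: (unliftP i2 i) => [j ->|->] //=.
  by rewrite /g' -Ei1 heq.
Qed.
End Assemble.

Theorem corollary5p6 (G : zmodType) (m : nat) (g : 'I_m -> G) :
  has_quadratic_groebner (Bsupp g) -> has_quadratic_groebner (Bmon g).
Proof.
move=> H; rewrite BmonE.
apply: (@assemble _ (supp_seq g)).
- exact: undup_uniq.
- exact: H.
- by move=> i; rewrite mem_undup map_f // mem_enum.
- by move=> x; rewrite mem_undup => /mapP [i _ ->]; exists i.
Qed.
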